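(* Let $A$ be a normal uniform Kan complex, $\pi:B\to A^{\mathrm{I}}$ a normal uniform Kan fibration, and $b:A\to B$ a map with $\pi\circ b=r$, where $r:A\to A^{\mathrm{I}}$ is the constant-path map. Then there is a map $j:A^{\mathrm{I}}\to B$ with $\pi\circ j=1_{A^{\mathrm{I}}}$ and $j\circ r=b$.
   Context: Let $\mathbb{B}$ be the category of finite sets $[n]=\{\bot,x_1,\dots,x_n,\top\}$ ($n\ge0$, $\bot\ne\top$) and functions preserving $\bot,\top$; cartesian cubical sets are presheaves on $\mathbb{B}^{op}$. $\mathrm{I}^n$ is the representable on $[n]$, $\mathrm{I}^n\cong\mathrm{I}\times\dots\times\mathrm{I}$, $\mathrm{I}=\mathrm{I}^1$, $\mathrm{I}^0=1$; the two maps $[1]\to[0]$ give endpoints $0,1:1\to\mathrm{I}$. $A^{\mathrm{I}}$ is the exponential and $r:A\to A^{\mathrm{I}}$ is induced by $\mathrm{I}\to1$. For $1\le i\le n$, $d\in\{0,1\}$, the face $\alpha_i^d:\mathrm{I}^{n-1}\to\mathrm{I}^n$ inserts $d$ in coordinate $i$; for $e\in\{0,1\}$ the open box $\sqcup^n_e\rightarrowtail\mathrm{I}^n$ is the union of the images of all faces $\alpha_i^d$ with $(i,d)\ne(1,e)$, with inclusion $i^n_e$. A uniform Kan fibration structure on $f:Y\to X$: for each $n\ge1$, $e\in\{0,1\}$, $k\ge1$ and commutative square $b':\mathrm{I}^k\times\sqcup^n_e\to Y$, $a:\mathrm{I}^k\times\mathrm{I}^n\to X$ with $fb'=a(1\times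 i^n_e)$, a chosen filler $\phi(a,b')$ ($\phi(a,b')(1\times i^n_e)=b'$, $f\phi(a,b')=a$), with $\phi(a,b')(\alpha\times1)=\phi(a(\alpha\times1),b'(\alpha\times1))$ for all $\alpha:\mathrm{I}^j\to\mathrm{I}^k$ ($j\ge1$). It is normal if for all $n\ge0$, $e$, $k\ge1$ and $c:\mathrm{I}^k\times\mathrm{I}^n\to Y$, with $\pi_n:\mathrm{I}^{n+1}\to\mathrm{I}^n$ forgetting the first coordinate, $\phi(fc(1\times\pi_n),c(1\times\pi_n)(1\times i^{n+1}_e))=c(1\times\pi_n)$. A normal uniform Kan complex is a cubical set $A$ with a normal uniform Kan fibration structure on $A\to1$. *)

(* Defs.v *)
From Stdlib Require Import FunctionalExtensionality ProofIrrelevance.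
From mathcomp Require Import all_boot.

Set Implicit Arguments.
Unset Strict Implicit.
Unset Printing Implicit Defensive.

(* The object [n] = {bot, x_1..x_n, top}.  An element of
   [m] other than bot/top is  inl j  (j : 'I_m, standing for x_(j+1));
   inr false = bot, inr true = top.  A morphism [n] -> [m] preserving
   bot and top is determined by the images of x_1..x_n.                    *)
Definition elt (m : nat) : finType := ('I_m + bool)%type.
Definition Hom (n m : nat) := {ffun 'I_n -> elt m}.

Definition hcomp n m k (g : Hom m k) (f : Hom n m) : Hom n k :=
  [ffun i => match f i with inl j => g j | inr b => inr b end].
Definition hid n : Hom n n := [ffun i => inl i].

Lemma hcomp_id_l n m (f : Hom n m) : hcomp (hid m) f = f.
Proof. apply/ffunP => i; rewrite !ffunE; case: (f i) => [j|b] //; by rewrite ffunE. Qed.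
Lemma hcomp_id_r n m (f : Hom n m) : hcomp f (hid n) = f.
Proof. apply/ffunP => i; by rewrite !ffunE. Qed.
Lemma hcomp_assoc n m k l (h : Hom k l) (g : Hom m k) (f : Hom n m) :
  hcomp h (hcomp g f) = hcomp (hcomp h g) f.
Proof. apply/ffunP => i; rewrite !ffunE; case: (f i) => [j|b] //=; by rewrite ffunE. Qed.

(* Cartesian cubical sets: presheaves on B^op = functors B -> Type.        *)
Record cset := CSet {
  cobj :> nat -> Type;
  cact : forall n m, Hom n m -> cobj n -> cobj m;
  cact_id : forall n x, cact (hid n) x = x;
  cact_comp : forall n m k (f : Hom n m) (g : Hom m k) x,
      cact (hcomp g f) x = cact g (cact f x) }.
Arguments cact {c n m}.

Record cmap (X Y : cset) := CMap {
  cfun :> forall n, X n -> Y n;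
  cnat : forall n m (f : Hom n m) x, cfun (cact f x) = cact f (cfun x) }.
Arguments cfun {X Y} c {n}.

Lemma cmap_ext X Y (F G : cmap X Y) :
  (forall n (x : X n), cfun F x = cfun G x) -> F = G.
Proof.
case: F => f fn; case: G => g gn /= H.
have E : f = g.
  apply: functional_extensionality_dep => n; apply: functional_extensionality => x; exact: H.
subst g; f_equal; exact: proof_irrelevance.
Qed.

Definition ccomp X Y Z (G : cmap Y Z) (F : cmap X Y) : cmap X Z.
Proof.
refine (@CMap X Z (fun n x => cfun G (cfun F x)) _).
by move=> n m f x; rewrite !cnat.
Defined.

Definition cid X : cmap X X.
Proof. by refine (@CMap X X (fun n x => x) _). Defined.

Lemma sig_ext (T : Type) (P : T -> Prop) (x y : {a : T | P a}) :
  proj1_sig x = proj1_sig y -> x = y.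
Proof. case: x => a pa; case: y => b pb /= E; subst b; f_equal; exact: proof_irrelevance. Qed.

Definition Icube (n : nat) : cset.
Proof.
refine (@CSet (fun m => Hom n m) (fun m m' f a => hcomp f a) _ _).
- by move=> m a; rewrite hcomp_id_l.
- by move=> m m' k f g a; rewrite hcomp_assoc.
Defined.

Definition cterm : cset.
Proof. by refine (@CSet (fun _ => unit) (fun _ _ _ x => x) _ _). Defined.

Definition toterm (X : cset) : cmap X cterm.
Proof. by refine (@CMap X cterm (fun _ _ => tt) _). Defined.

Definition cprod (X Y : cset) : cset.
Proof.
refine (@CSet (fun m => (X m * Y m)%type)
          (fun m m' f p => (cact f p.1, cact f p.2)) _ _).
- by move=> m [x y] /=; rewrite !cact_id.
- by move=> m m' k f g [x y] /=; rewrite !cact_comp.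
Defined.

Definition cprodmap X X' Y Y' (F : cmap X X') (G : cmap Y Y') :
  cmap (cprod X Y) (cprod X' Y').
Proof.
refine (@CMap (cprod X Y) (cprod X' Y')
          (fun n p => (cfun F p.1, cfun G p.2)) _).
by move=> n m f [x y] /=; rewrite !cnat.
Defined.

Definition yon m m' (f : Hom m m') : cmap (Icube m') (Icube m).
Proof.
refine (@CMap (Icube m') (Icube m) (fun n (a : Hom m' n) => hcomp a f) _).
by move=> n k h a /=; rewrite hcomp_assoc.
Defined.

(* Face alpha_(i+1)^d : I^n -> I^(n+1) inserting d in coordinate i+1
   (i : 'I_(n+1); coordinate 1 is i = ord0; d = false is 0, true is 1). *)
Definition faceY n (i : 'I_n.+1) (d : bool) : Hom n.+1 n :=
  [ffun j => match unlift i j with Some k => inl k | None => inr d end].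
Definition face n (i : 'I_n.+1) (d : bool) : cmap (Icube n) (Icube n.+1) :=
  yon (faceY i d).

(* pi_n : I^(n+1) -> I^n forgetting the first coordinate *)
Definition projY n : Hom n n.+1 := [ffun j => inl (lift ord0 j)].
Definition proj n : cmap (Icube n.+1) (Icube n) := yon (projY n).

(* The open box  sqcup^(n+1)_e  as a sub-presheaf of I^(n+1): the union of
   the images of all faces alpha_i^d with (i,d) <> (1,e). *)
Definition inbox n (e : bool) m (a : Hom n.+1 m) : Prop :=
  exists (i : 'I_n.+1) (d : bool), ~ (i = ord0 /\ d = e) /\
    exists y : Icube n m, cfun (face i d) y = a.

Lemma inbox_act n e m m' (f : Hom m m') (a : Hom n.+1 m) :
  @inbox n e m a -> @inbox n e m' (hcomp f a).
Proof.
case=> i [d [ne [y Hy]]]; exists i, d; split => //.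
exists (@cact (Icube n) _ _ f y).
by rewrite (cnat (face i d)) Hy.
Qed.

Definition Box (n : nat) (e : bool) : cset.
Proof.
refine (@CSet (fun m => {a : Hom n.+1 m | @inbox n e m a})
          (fun m m' f x => exist _ (hcomp f (proj1_sig x))
                                 (inbox_act f (proj2_sig x))) _ _).
- by move=> m x; apply: sig_ext; rewrite /= hcomp_id_l.
- by move=> m m' k f g x; apply: sig_ext; rewrite /= hcomp_assoc.
Defined.

Definition boxinc (n : nat) (e : bool) : cmap (Box n e) (Icube n.+1).
Proof. by refine (@CMap (Box n e) (Icube n.+1) (fun m x => proj1_sig x) _). Defined.

Definition expI (A : cset) : cset.
Proof.
refine (@CSet (fun m => cmap (cprod (Icube m) (Icube 1)) A)
          (fun m m' f phi => ccomp phi (cprodmap (yon f) (cid (Icube 1)))) _ _).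
- move=> m phi; apply: cmap_ext => n [a t] /=; by rewrite hcomp_id_r.
- move=> m m' k f g phi; apply: cmap_ext => n [a t] /=; by rewrite hcomp_assoc.
Defined.

(* r : A -> A^I, induced by I -> 1 (constant paths) *)
Definition rI_at (A : cset) m (x : A m) : cmap (cprod (Icube m) (Icube 1)) A.
Proof.
refine (@CMap (cprod (Icube m) (Icube 1)) A (fun n (p : cprod (Icube m) (Icube 1) n) => cact p.1 x) _).
by move=> n k h [a t] /=; rewrite cact_comp.
Defined.

Definition rI (A : cset) : cmap A (expI A).
Proof.
refine (@CMap A (expI A) (fun m x => rI_at x) _).
move=> n m f x; apply: cmap_ext => k [a t] /=; by rewrite cact_comp.
Defined.

(* Uniform Kan fibration structures.  Dimensions n >= 1, k >= 1, j >= 1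
   are written n.+1, k.+1, j.+1. *)
Record UKan (Y X : cset) (f : cmap Y X) := {
  kfill : forall n e k
      (a : cmap (cprod (Icube k.+1) (Icube n.+1)) X)
      (b' : cmap (cprod (Icube k.+1) (Box n e)) Y),
      ccomp f b' = ccomp a (cprodmap (cid _) (boxinc n e)) ->
      cmap (cprod (Icube k.+1) (Icube n.+1)) Y;
  kfill_box : forall n e k a b' H,
      ccomp (@kfill n e k a b' H) (cprodmap (cid _) (boxinc n e)) = b';
  kfill_fib : forall n e k a b' H,
      ccomp f (@kfill n e k a b' H) = a;
  kfill_unif : forall n e k j (alpha : cmap (Icube j.+1) (Icube k.+1)) a b' H H',
      ccomp (@kfill n e k a b' H) (cprodmap alpha (cid _)) =
      @kfill n e j (ccomp a (cprodmap alpha (cid _)))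
                   (ccomp b' (cprodmap alpha (cid _))) H' }.

Definition normal (Y X : cset) (f : cmap Y X) (phi : UKan f) : Prop :=
  forall n e k (c : cmap (cprod (Icube k.+1) (Icube n)) Y) H,
    @kfill _ _ _ phi n e k
      (ccomp f (ccomp c (cprodmap (cid _) (proj n))))
      (ccomp (ccomp c (cprodmap (cid _) (proj n))) (cprodmap (cid _) (boxinc n e)))
      H
    = ccomp c (cprodmap (cid _) (proj n)).

(* Main.v *)
Require Import Defs.
From Stdlib Require Import FunctionalExtensionality ProofIrrelevance.
From mathcomp Require Import all_boot.
Set Implicit Arguments. Unset Strict Implicit. Unset Printing Implicit Defensive.

Definition pair2 m (u v : Hom 1 m) : Hom 2 m :=
  [ffun i : 'I_2 => if val i == 0 then u ord0 else v ord0].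
Definition pt0 m : Hom 1 m := [ffun _ => inr false].
Definition pt1 m : Hom 1 m := [ffun _ => inr true].
Definition tcoord m (a : Hom 2 m) : Hom 1 m :=
  [ffun _ => match a ord_max with inr true => a ord0 | _ => inr false end].

Lemma pair2_nat m m' (h : Hom m m') u v :
  hcomp h (pair2 u v) = pair2 (hcomp h u) (hcomp h v).
Proof. apply/ffunP => i; rewrite !ffunE; by case: ifP. Qed.
Lemma pt0_nat m m' (h : Hom m m') : hcomp h (pt0 m) = pt0 m'.
Proof. by apply/ffunP => i; rewrite !ffunE. Qed.
Lemma pt1_nat m m' (h : Hom m m') : hcomp h (pt1 m) = pt1 m'.
Proof. by apply/ffunP => i; rewrite !ffunE. Qed.

Lemma inbox_fact m (a : Hom 2 m) : @inbox 1 true m a ->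
  [\/ a ord_max = inr false, a ord_max = inr true | a ord0 = inr false].
Proof.
case=> i [d [ne [y Hy]]].
have E : a i = inr d by rewrite -Hy /= !ffunE unlift_none.
clear Hy; case: i ne E => [[|[|i]] Hi] //= ne E.
- have Ed : d = false by move: ne; case: d {E} => // ne; exfalso; apply: ne; split=> //; exact: val_inj.
  have -> : ord0 = Ordinal Hi by exact: val_inj.
  by rewrite E Ed; constructor 3.
- have -> : ord_max = Ordinal Hi by exact: val_inj.
  rewrite E; by case: d {ne E}; [constructor 2|constructor 1].
Qed.

Lemma tcoord_nat m m' (h : Hom m m') a : @inbox 1 true m a ->
  tcoord (hcomp h a) = hcomp h (tcoord a).
Proof.
move=> /inbox_fact Ha; apply/ffunP => i; rewrite !ffunE.
case: Ha => E; rewrite E //.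
case: (a ord_max) => [j|[]] //=; by case: (h j) => [?|[]].
Qed.

Lemma box0_fact m (a : Hom 1 m) : @inbox 0 true m a -> a ord0 = inr false.
Proof.
case=> i [d [ne [y Hy]]].
have E : a i = inr d by rewrite -Hy /= !ffunE unlift_none.
have -> : ord0 = i by rewrite (ord1 i).
rewrite E; clear Hy E; case: d ne => // ne; exfalso; apply: ne; split=> //; exact: ord1.
Qed.

Lemma inbox_s0 n (t s : Hom 1 n) : s ord0 = inr false -> @inbox 1 true n (pair2 t s).
Proof.
move=> Hs; exists ord_max, false; split; first by case=> /(congr1 val).
exists t; apply/ffunP => i; rewrite /= !ffunE.
case: i => [[|[|i]] Hi] //=.
- have -> : unlift ord_max (Ordinal Hi) = Some ord0.
    by case: unliftP => [j _|/(congr1 val) //]; rewrite (ord1 j).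
  by [].
- have -> : Ordinal Hi = ord_max by apply: val_inj.
  by rewrite unlift_none.
Qed.

Lemma kfill_congr (Y X : cset) (f : cmap Y X) (phi : UKan f) n e k a1 a2 b1 b2 H1 H2 :
  a1 = a2 -> b1 = b2 -> @kfill _ _ _ phi n e k a1 b1 H1 = @kfill _ _ _ phi n e k a2 b2 H2.
Proof. move=> E1 E2; subst; f_equal; exact: proof_irrelevance. Qed.

Lemma kfill_unif' (Y X : cset) (f : cmap Y X) (phi : UKan f) n e k j
  (alpha : cmap (Icube j.+1) (Icube k.+1)) a b' H a2 b2 H2 :
  ccomp a (cprodmap alpha (cid _)) = a2 -> ccomp b' (cprodmap alpha (cid _)) = b2 ->
  ccomp (@kfill _ _ _ phi n e k a b' H) (cprodmap alpha (cid _)) =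
  @kfill _ _ _ phi n e j a2 b2 H2.
Proof. move=> E1 E2; subst; exact: kfill_unif. Qed.

Lemma cmap_eq_at X Y (F G : cmap X Y) n (x : X n) : F = G -> cfun F x = cfun G x.
Proof. by move=> ->. Qed.

Definition tmap : cmap (Box 1 true) (Icube 1).
Proof.
refine (@CMap (Box 1 true) (Icube 1) (fun m x => tcoord (proj1_sig x)) _).
move=> n m f [a Ha] /=; exact: tcoord_nat.
Defined.

Definition zmap X : cmap X (Icube 1).
Proof.
refine (@CMap X (Icube 1) (fun m x => pt0 m) _).
move=> n m f x /=; by rewrite pt0_nat.
Defined.

Lemma inbox_s1 n (t s : Hom 1 n) : s ord0 = inr true -> @inbox 1 true n (pair2 t s).
Proof.
move=> Hs; exists ord_max, true; split; first by case=> /(congr1 val).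
exists t; apply/ffunP => i; rewrite /= !ffunE.
case: i => [[|[|i]] Hi] //=.
- have -> : unlift ord_max (Ordinal Hi) = Some ord0.
    by case: unliftP => [j _|/(congr1 val) //]; rewrite (ord1 j).
  by [].
- have -> : Ordinal Hi = ord_max by apply: val_inj.
  by rewrite unlift_none.
Qed.

Definition extY m m' (f : Hom m m') : Hom m.+1 m'.+1 :=
  [ffun i => match unlift ord0 i with
             | None => inl ord0
             | Some j => match f j with inl k => inl (lift ord0 k) | inr b => inr b end end].

Lemma ext_proj m m' (f : Hom m m') : hcomp (extY f) (projY m) = hcomp (projY m') f.
Proof.
apply/ffunP => j; rewrite !ffunE liftK.
by case: (f j) => [k|c] //; rewrite ffunE.
Qed.

Lemma ext_face m m' (f : Hom m m') :
  hcomp (faceY (ord0 : 'I_m'.+1) false) (extY f) = hcomp f (faceY (ord0 : 'I_m.+1) false).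
Proof.
apply/ffunP => i; rewrite !ffunE.
case: (unliftP ord0 i) => [j|] Ei; last by rewrite ffunE unlift_none.
by case: (f j) => [k|c] //; rewrite ffunE liftK.
Qed.
Lemma face_proj m : hcomp (faceY (ord0 : 'I_m.+1) false) (projY m) = hid m.
Proof. by apply/ffunP => j; rewrite !ffunE liftK. Qed.

Section Main.
Variables (A : cset) (kA : UKan (toterm A)) (B : cset) (pi : cmap B (expI A))
  (kpi : UKan pi) (b : cmap A B) (hb : ccomp pi b = rI A).

Definition Gam m (g : expI A m) : cmap (cprod (Icube m.+1) (Icube 1)) A :=
  ccomp g (cprodmap (proj m) (cid _)).

Definition bA m (g : expI A m) : cmap (cprod (Icube m.+1) (Box 1 true)) A :=
  ccomp (Gam g) (cprodmap (cid _) tmap).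

Lemma HA_eq m (g : expI A m) :
  ccomp (toterm A) (bA g) = ccomp (toterm _) (cprodmap (cid _) (boxinc 1 true)).
Proof. by apply: cmap_ext. Qed.

Definition HA m (g : expI A m) := @kfill _ _ _ kA 1 true m (toterm _) (bA g) (HA_eq g).

Lemma HA_box m (g : expI A m) n (z : Hom m.+1 n) (a : Hom 2 n) (w : @inbox 1 true n a) :
  cfun (HA g) ((z, a) : cprod (Icube m.+1) (Icube 2) n) = cfun (Gam g) ((z, tcoord a) : cprod (Icube m.+1) (Icube 1) n).
Proof.
have := cmap_eq_at ((z, exist _ a w) : cprod (Icube m.+1) (Box 1 true) n) (kfill_box kA (HA_eq g)).
by [].
Qed.

Definition pathAt m (g : expI A m) m' (z : Hom m.+1 m') (s : Hom 1 m') : expI A m'.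
Proof.
refine (@CMap (cprod (Icube m') (Icube 1)) A
   (fun n (p : cprod (Icube m') (Icube 1) n) =>
      cfun (HA g) ((hcomp p.1 z, pair2 p.2 (hcomp p.1 s)) : cprod (Icube m.+1) (Icube 2) n)) _).
move=> n n' h [y t] /=.
by rewrite -(cnat (HA g)) /= pair2_nat !hcomp_assoc.
Defined.

Definition aP m (g : expI A m) : cmap (cprod (Icube m.+1) (Icube 1)) (expI A).
Proof.
refine (@CMap (cprod (Icube m.+1) (Icube 1)) (expI A)
   (fun m' p => pathAt g p.1 p.2) _).
move=> n n' h [z s] /=; apply: cmap_ext => k [y t] /=.
by rewrite !hcomp_assoc.
Defined.

Definition bP m (g : expI A m) : cmap (cprod (Icube m.+1) (Box 0 true)) B :=
  ccomp b (ccomp (Gam g) (cprodmap (cid _) (zmap _))).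

Lemma hb_at n (x : A n) : cfun pi (cfun b x) = cfun (rI A) x.
Proof. exact: (cmap_eq_at x hb). Qed.

Lemma HP_eq m (g : expI A m) :
  ccomp pi (bP g) = ccomp (aP g) (cprodmap (cid _) (boxinc 0 true)).
Proof.
apply: cmap_ext => n [z [a Ha]] /=.
rewrite hb_at; apply: cmap_ext => k [y t] /=.
have Hs : (hcomp y a) ord0 = inr false by rewrite ffunE (box0_fact Ha).
rewrite (HA_box _ _ (inbox_s0 t Hs)) /=.
rewrite -(cnat g) /= hcomp_assoc pt0_nat.
congr (cfun g (_, _)).
apply/ffunP => i; move: Hs; rewrite !ffunE /= => ->.
by [].
Qed.

Definition LP m (g : expI A m) := @kfill _ _ _ kpi 0 true m (aP g) (bP g) (HP_eq g).

Definition jfun m (g : expI A m) : B m :=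
  cfun (LP g) ((faceY (ord0 : 'I_m.+1) false, pt1 m) : cprod (Icube m.+1) (Icube 1) m).


Lemma Gam_nat m m' (f : Hom m m') (g : expI A m) n z t :
  cfun (Gam (@cact (expI A) _ _ f g)) ((z, t) : cprod (Icube m'.+1) (Icube 1) n) =
  cfun (Gam g) ((hcomp z (extY f), t) : cprod (Icube m.+1) (Icube 1) n).
Proof. by rewrite /= -!hcomp_assoc ext_proj. Qed.

Lemma HA_nat m m' (f : Hom m m') (g : expI A m) :
  HA (@cact (expI A) _ _ f g) = ccomp (HA g) (cprodmap (yon (extY f)) (cid _)).
Proof.
symmetry; apply: kfill_unif'; first by apply: cmap_ext.
apply: cmap_ext => n [z a] /=.
by rewrite -!hcomp_assoc ext_proj.
Qed.

Lemma LP_nat m m' (f : Hom m m') (g : expI A m) :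
  LP (@cact (expI A) _ _ f g) = ccomp (LP g) (cprodmap (yon (extY f)) (cid _)).
Proof.
symmetry; apply: kfill_unif'.
  apply: cmap_ext => n [z s]; apply: cmap_ext => k [y t] /=.
  by rewrite (HA_nat f g) /= !hcomp_assoc.
apply: cmap_ext => n [z a] /=.
by rewrite -!hcomp_assoc ext_proj.
Qed.

Lemma jfun_nat m m' (f : Hom m m') (g : expI A m) :
  jfun (@cact (expI A) _ _ f g) = cact f (jfun g).
Proof.
rewrite /jfun LP_nat -(cnat (LP g)) /=.
by rewrite ext_face pt1_nat.
Qed.

Definition J : cmap (expI A) B := CMap jfun_nat.

Lemma J_sect : ccomp pi J = cid (expI A).
Proof.
apply: cmap_ext => m g.
have E := cmap_eq_at ((faceY (ord0 : 'I_m.+1) false, pt1 m) : cprod (Icube m.+1) (Icube 1) m) (kfill_fib kpi (HP_eq g)).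
rewrite /= /jfun /LP; rewrite /= in E; rewrite E.
apply: cmap_ext => n [y t] /=.
have Hs : (hcomp y (pt1 m)) ord0 = inr true by rewrite pt1_nat ffunE.
rewrite (HA_box _ _ (inbox_s1 t Hs)) /=.
rewrite -hcomp_assoc face_proj hcomp_id_r.
congr (cfun g (_, _)).
apply/ffunP => i; rewrite !ffunE /= (ord1 i); by [].
Qed.

End Main.

Lemma HA_r (A : cset) (kA : UKan (toterm A)) (nA : normal kA) n (x : A n) :
  HA kA (cfun (rI A) x) = ccomp (Gam (cfun (rI A) x)) (cprodmap (cid _) (proj 1)).
Proof.
have H : ccomp (toterm A) (ccomp (ccomp (Gam (cfun (rI A) x)) (cprodmap (cid _) (proj 1)))
                (cprodmap (cid _) (boxinc 1 true))) =
         ccomp (ccomp (toterm A) (ccomp (Gam (cfun (rI A) x)) (cprodmap (cid _) (proj 1))))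
                (cprodmap (cid _) (boxinc 1 true)) by apply: cmap_ext.
rewrite -(nA 1 true n _ H) /HA; apply: kfill_congr; first by apply: cmap_ext.
by apply: cmap_ext => k [z a].
Qed.

Lemma LP_r (A : cset) (kA : UKan (toterm A)) (nA : normal kA) (B : cset) (pi : cmap B (expI A))
  (kpi : UKan pi) (npi : normal kpi) (b : cmap A B) (hb : ccomp pi b = rI A) n (x : A n) :
  @LP A kA B pi kpi b hb n (cfun (rI A) x) =
  ccomp (ccomp b (ccomp (Gam (cfun (rI A) x)) (cprodmap (cid _) (zmap _))))
        (cprodmap (cid _) (proj 0)).
Proof.
set c := ccomp b (ccomp (Gam (cfun (rI A) x)) (cprodmap (cid _) (zmap _))).
have H : ccomp pi (ccomp (ccomp c (cprodmap (cid _) (proj 0))) (cprodmap (cid _) (boxinc 0 true))) =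
         ccomp (ccomp pi (ccomp c (cprodmap (cid _) (proj 0)))) (cprodmap (cid _) (boxinc 0 true)).
  by apply: cmap_ext.
rewrite -(npi 0 true n _ H) /LP; apply: kfill_congr; last by apply: cmap_ext => k [z a].
apply: cmap_ext => m' [z s]; apply: cmap_ext => k [y t] /=.
rewrite (HA_r nA) /= (hb_at hb) /=.
by rewrite -cact_comp hcomp_assoc.
Qed.

Theorem proposition3p13 (A : cset) (kA : UKan (toterm A)) (nA : normal kA)
  (B : cset) (pi : cmap B (expI A)) (kpi : UKan pi) (npi : normal kpi)
  (b : cmap A B) (hb : ccomp pi b = rI A) :
  exists j : cmap (expI A) B, ccomp pi j = cid (expI A) /\ ccomp j (rI A) = b.
Proof.
exists (J kA kpi hb); split; first exact: J_sect.
apply: cmap_ext => n x /=.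
rewrite /jfun (LP_r nA npi hb x) /=.
by rewrite face_proj cact_id.
Qed.
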